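(* Let $K\ge 1$ and $T\ge 2$ be integers and let $a_1,\dots,a_{T-1}$ be binary sequences of period $K$. Define the binary sequences $s=I(0_K,a_1,\dots,a_{T-1})$ and $s'=I(1_K,a_1,\dots,a_{T-1})$ of period $KT$. For $0\le \tau<KT$ write $\tau=\tau_1T+\tau_2$ with $0\le\tau_2\le T-1$. Then $$R_{s'}(\tau)=\begin{cases}R_s(\tau)&\text{if }\tau_2=0,\\ R_s(\tau)+2d(a_{\tau_2})+2d(a_{T-\tau_2})&\text{if }\tau_2\neq 0,\end{cases}$$ $$R_{s,s'}(\tau)=\begin{cases}KT-2K&\text{if }\tau=0,\\ R_s(\tau)-2K&\text{if }\tau_2=0,\ \tau\neq 0,\\ R_s(\tau)+2d(a_{T-\tau_2})&\text{otherwise},\end{cases}\qquad R_{s',s}(\tau)=\begin{cases}KT-2K&\text{if }\tau=0,\\ R_s(\tau)-2K&\text{if }\tau_2=0,\ \tau\neq 0,\\ R_s(\tau)+2d(a_{\tau_2})&\text{otherwise}.\end{cases}$$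
   Context: A binary sequence of period $n$ is a map $\mathbb{Z}\to\{0,1\}$ with period $n$ (indices are taken modulo $n$). For binary sequences $a,b$ of period $n$, the periodic correlation is $R_{a,b}(\tau)=\sum_{t=0}^{n-1}(-1)^{a(t)+b(t+\tau)}$ (with $t+\tau$ taken mod $n$), and $R_a(\tau)=R_{a,a}(\tau)$ is the autocorrelation. For binary sequences $b_0,\dots,b_{T-1}$ of period $K$, the interleaved sequence $I(b_0,\dots,b_{T-1})$ is the binary sequence $v$ of period $KT$ defined by $v(iT+j)=b_j(i)$ for $0\le i\le K-1$, $0\le j\le T-1$ (i.e. the $j$-th column of the $K\times T$ array whose rows are consecutive blocks of $T$ terms of $v$ is $b_j$). $0_K$ and $1_K$ denote the all-zero and all-one sequences of period $K$. For a binary sequence $a$ of period $K$, its balance difference is $d(a)=2|\{0\le t\le K-1: a(t)=1\}|-K$. *)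

(* Defs.v *)
From mathcomp Require Import all_boot all_order all_algebra.
Set Implicit Arguments. Unset Strict Implicit. Unset Printing Implicit Defensive.
Import GRing.Theory Num.Theory.
Local Open Scope ring_scope.

(* A binary sequence of period n is represented by a function nat -> bool
   whose values are only read at indices 0..n-1 (indices reduced mod n). *)

Definition corr (n : nat) (a b : nat -> bool) (tau : nat) : int :=
  \sum_(t < n) (-1) ^+ (nat_of_bool (a t) + nat_of_bool (b ((t + tau) %% n)))%N.

Definition acorr (n : nat) (a : nat -> bool) (tau : nat) : int := corr n a a tau.

(* interleaved sequence I(b_0,...,b_{T-1}) of period K*T, column sequences of
   period K: v(i*T + j) = b_j(i); defined on all of nat by reduction mod K*T *)
Definition interleave (K T : nat) (b : nat -> nat -> bool) (m : nat) : bool :=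
  b (m %% T)%N ((m %/ T) %% K)%N.

Definition bal (K : nat) (a : nat -> bool) : int :=
  2 * (#|[set t : 'I_K | a t]|)%:Z - K%:Z.

(* column families for s = I(0_K, a_1, ..., a_{T-1}) and s' = I(1_K, a_1, ...) *)
Definition cols (c : bool) (a : nat -> nat -> bool) : nat -> nat -> bool :=
  fun j => if j == 0%N then (fun _ => c) else a j.

(* Main.v *)
Require Import Defs.
From mathcomp Require Import all_boot all_order all_algebra.
From mathcomp Require Import zify ring lra.
Import GRing.Theory Num.Theory.
Local Open Scope ring_scope.

Definition sg (b : bool) : int := (-1) ^+ (nat_of_bool b).
Definition E (T m : nat) : int := (nat_of_bool (m %% T == 0)%N)%:Z.

Lemma corrE n f g tau : corr n f g tau = \sum_(t < n) sg (f t) * sg (g ((t + tau) %% n)%N).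
Proof. by apply: eq_bigr => t _; rewrite /sg exprD. Qed.

Lemma sg_true (K T : nat) a m :
  sg (interleave K T (cols true a) m) = sg (interleave K T (cols false a) m) - 2 * E T m.
Proof. rewrite /interleave /cols /E /sg; case: eqP => /= _. all: rewrite ?subr0 ?mulr0 //. Qed.

Lemma il_mod (K T : nat) b m : (0 < T)%N ->
  interleave K T b (m %% (K * T)) = interleave K T b m.
Proof.
move=> hT; rewrite /interleave.
have dT : (T %| K * T)%N by apply: dvdn_mull.
rewrite (modn_dvdm _ dT) divn_modl // mulnK // modn_mod //.
Qed.

Lemma E_mod (K T : nat) m : E T (m %% (K * T)) = E T m.
Proof. by rewrite /E (modn_dvdm _ (dvdn_mull _ (dvdnn T))). Qed.

Lemma il_small (K T : nat) b i j : (j < T)%N -> (i < K)%N ->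
  interleave K T b (i * T + j) = b j i.
Proof.
move=> hj hi; rewrite /interleave modnMDl modn_small // divnMDl ?(leq_ltn_trans _ hj) //.
by rewrite divn_small // addn0 modn_small.
Qed.

Lemma sum_split (K T : nat) (F : nat -> int) :
  \sum_(t < K * T) F t = \sum_(i < K) \sum_(j < T) F (i * T + j)%N.
Proof.
elim: K => [|K IH]; first by rewrite mul0n !big_ord0.
rewrite big_ord_recr /= -IH -!(big_mkord xpredT) mulSnr.
rewrite (@big_cat_nat _ _ _ (K * T)) /= ?leq_addr //; congr (_ + _).
rewrite -(big_mkord xpredT (fun j => F (K*T + j)%N)) (big_addn 0 (K*T+T) (K*T)) addKn; apply: eq_bigr => i _; by rewrite addnC.
Qed.

Lemma rot (N c : nat) (F : nat -> int) : (0 < N)%N ->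
  \sum_(i < N) F ((i + c) %% N)%N = \sum_(i < N) F i.
Proof.
move=> hN.
pose h := fun i : 'I_N => Ordinal (ltn_pmod (i + c) hN).
have hinj : injective h.
  move=> i j /(congr1 val) /= /eqP; rewrite eqn_modDr !modn_small // => /eqP.
  exact: val_inj.
by rewrite [RHS](reindex_inj hinj). Qed.

Lemma sum_sg (K : nat) (f : nat -> bool) : \sum_(i < K) sg (f i) = - bal K f.
Proof.
rewrite /bal.
have -> : \sum_(i < K) sg (f i) = \sum_(i < K) (1 - 2 * (nat_of_bool (f i))%:Z).
  by apply: eq_bigr => i _; rewrite /sg; case: (f i).
have hc : (#|[set t : 'I_K | f t]| : int) = \sum_(i < K) ((nat_of_bool (f i)) : int).
  rewrite -sum1_card big_mkcond /= -natz natr_sum; apply: eq_bigr => i _.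
  by rewrite inE; case: (f i).
rewrite sumrB sumr_const card_ord -mulr_sumr hc; ring.
Qed.

Lemma colsum (K : nat) a j :
  \sum_(i < K) sg (cols false a j i) = if j == 0%N then K%:Z else - bal K (a j).
Proof.
rewrite /cols; case: eqP => _; last exact: sum_sg.
by rewrite /sg /= sumr_const card_ord expr0 -natz.
Qed.

Lemma modkey (T tau j : nat) : (0 < T)%N -> (j < T)%N ->
  ((j + tau) %% T == 0)%N = (j == (T - tau %% T) %% T)%N.
Proof.
move=> hT hj; rewrite -modnDmr.
have hr : (tau %% T < T)%N by rewrite ltn_pmod.
move: (tau %% T)%N hr => r hr.
case: (posnP r) => [->|rp].
  by rewrite addn0 subn0 modnn modn_small.
rewrite [((T - r) %% T)%N]modn_small; last lia.
case: (ltnP (j + r) T) => h.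
  rewrite modn_small //; apply/eqP/eqP; lia.
have -> : (j + r = (j + r - T) + T)%N by lia.
rewrite modnDr modn_small; last lia.
apply/eqP/eqP; lia.
Qed.

Theorem theorem1 (K T : nat) (hK : (1 <= K)%N) (hT : (2 <= T)%N)
    (a : nat -> nat -> bool) (tau : nat) (htau : (tau < K * T)%N) :
  let s := interleave K T (cols false a) in
  let s' := interleave K T (cols true a) in
  let tau2 := (tau %% T)%N in
  [/\ acorr (K * T) s' tau =
        (if tau2 == 0%N then acorr (K * T) s tau
         else acorr (K * T) s tau + 2 * bal K (a tau2) + 2 * bal K (a (T - tau2)%N)),
      corr (K * T) s s' tau =
        (if tau == 0%N then (K * T)%:Z - 2 * K%:Z
         else if tau2 == 0%N then acorr (K * T) s tau - 2 * K%:Z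
         else acorr (K * T) s tau + 2 * bal K (a (T - tau2)%N)) &
      corr (K * T) s' s tau =
        (if tau == 0%N then (K * T)%:Z - 2 * K%:Z
         else if tau2 == 0%N then acorr (K * T) s tau - 2 * K%:Z
         else acorr (K * T) s tau + 2 * bal K (a tau2))].
Proof.
have hT0 : (0 < T)%N by lia.
move=> s s' tau2.
have hs' m : sg (s' m) = sg (s m) - 2 * E T m by apply: sg_true.
have hsm m : s (m %% (K * T))%N = s m by apply: il_mod.
pose S t := sg (s t).
pose R := \sum_(t < K * T) S t * S (t + tau)%N.
pose A := \sum_(t < K * T) E T t * S (t + tau)%N.
pose B := \sum_(t < K * T) S t * E T (t + tau)%N.
pose C := \sum_(t < K * T) E T t * E T (t + tau)%N.
have hR : acorr (K * T) s tau = R.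
  by rewrite /acorr corrE; apply: eq_bigr => t _; rewrite hsm.
have h1 : acorr (K * T) s' tau = R - 2 * A - 2 * B + 4 * C.
  rewrite /acorr corrE /R /A /B /C !mulr_sumr -!sumrB -big_split /=.
  by apply: eq_bigr => t _; rewrite !hs' E_mod hsm /S; ring.
have h2 : corr (K * T) s s' tau = R - 2 * B.
  rewrite corrE /R /B !mulr_sumr -!sumrB.
  by apply: eq_bigr => t _; rewrite !hs' E_mod hsm /S; ring.
have h3 : corr (K * T) s' s tau = R - 2 * A.
  rewrite corrE /R /A !mulr_sumr -!sumrB.
  by apply: eq_bigr => t _; rewrite !hs' hsm /S; ring.
have hE0 : E T 0 = 1 by rewrite /E mod0n.
pose j0 : 'I_T := Ordinal hT0.
have hA : A = if tau2 == 0%N then K%:Z else - bal K (a tau2).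
  rewrite /A (sum_split K T (fun t => E T t * S (t + tau)%N)).
  under eq_bigr => i _.
    rewrite (bigD1 j0) //= big1; last first.
      move=> j hj; rewrite /E modnMDl modn_small //.
      have -> : (j == 0 :> nat) = false by apply/negbTE; move: hj; apply: contra => /eqP h; apply/eqP/val_inj.
      by rewrite mul0r.
    rewrite addn0 addr0 /E modnMl mul1r /S /s /interleave modnMDl divnMDl //.
    over.
  rewrite /= (rot _ _ (fun i => sg (cols false a tau2 i))) ?colsum //; lia.
have hB : B = if tau2 == 0%N then K%:Z else - bal K (a (T - tau2)%N).
  rewrite /B (sum_split K T (fun t => S t * E T (t + tau)%N)).
  under eq_bigr => i _.
    under eq_bigr => j _ do rewrite /S /s il_small // /E -addnA modnMDl -/(E T (j + tau)).
    over.
  rewrite exchange_big /=.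
  under eq_bigr => j _ do rewrite -mulr_suml colsum.
  pose j1 : 'I_T := Ordinal (ltn_pmod (T - tau2) hT0).
  rewrite (bigD1 j1) //= big1; last first.
    move=> j hj; rewrite /E modkey //.
    have -> : (((j : nat) == (T - tau %% T) %% T)%N :> bool) = false.
      by apply/negbTE; move: hj; apply: contra => /eqP h; apply/eqP/val_inj.
    by rewrite mulr0.
  rewrite addr0 /E modkey ?ltn_pmod // /tau2 eqxx mulr1.
  case: (eqVneq (tau %% T)%N 0%N) => h0; first by rewrite h0 subn0 modnn.
  have hp : (0 < tau %% T)%N by rewrite lt0n.
  rewrite modn_small; last lia.
  have -> : (T - tau %% T == 0)%N = false by apply/negbTE; lia.
  by [].
have hC : C = if tau2 == 0%N then K%:Z else 0.
  rewrite /C (sum_split K T (fun t => E T t * E T (t + tau)%N)).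
  under eq_bigr => i _.
    rewrite (bigD1 j0) //= big1; last first.
      move=> j hj; rewrite /E modnMDl modn_small //.
      have -> : (j == 0 :> nat) = false by apply/negbTE; move: hj; apply: contra => /eqP h; apply/eqP/val_inj.
      by rewrite mul0r.
    rewrite addn0 addr0 /E modnMl mul1r modnMDl.
    over.
  rewrite sumr_const card_ord /tau2; case: eqP => _; rewrite /= ?mul0rn //; by rewrite natz.
have hR0 : tau = 0%N -> R = (K * T)%:Z.
  move=> h0; rewrite /R h0.
  rewrite (eq_bigr (fun _ => 1)); last by move=> t _; rewrite addn0 /S /sg; case: (s t).
  by rewrite sumr_const card_ord -natz.
rewrite hR h1 h2 h3 hA hB hC.
case: (eqVneq tau 0%N) => [ht0|ht0].
  have ht2 : tau2 = 0%N by rewrite /tau2 ht0 mod0n.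
  rewrite ht2 eqxx hR0 //; split; ring.
case: eqP => _ /=; split; ring.
Qed.
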